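(* Let $d$ and $m$ be positive integers and let $P$ be a finite poset such that $|P|> m$ and every subset $S$ of $P$ with $|S|>m$ satisfies $\mathrm{comp}(S)\geq |S|d$. Then there exists a function \[f:\binom{P}{\leq |P|/(2d+1)}\to\binom{P}{\leq m}\] such that for every antichain $I\subseteq P$ there is a subset $T\subseteq I$ with $|T|\leq |P|/(2d+1)$, $T\cap f(T)=\emptyset$ and $I\subseteq T\cup f(T)$.
   Context: For a set $X$ and real $j$, $\binom{X}{\leq j}$ denotes the family of all subsets of $X$ of cardinality at most $j$. $\mathrm{comp}(S)$ is the number of unordered pairs of distinct comparable elements of $S$. An antichain is a set of pairwise incomparable elements. *)

(* Defs.v *)
From HB Require Import structures.
From mathcomp Require Import all_boot all_order.
Set Implicit Arguments. Unset Strict Implicit. Unset Printing Implicit Defensive.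
Import Order.TTheory.

(* ncomp S : number of unordered pairs of distinct comparable elements of S.
   Each such unordered pair {x,y} corresponds to exactly one ordered pair
   (x,y) with x < y. *)
Definition ncomp (disp : Order.disp_t) (P : finPOrderType disp) (S : {set P}) : nat :=
  #|[set xy : (P * P)%type | [&& xy.1 \in S, xy.2 \in S & (xy.1 < xy.2)%O]]|.

Definition antichain (disp : Order.disp_t) (P : finPOrderType disp) (I : {set P}) : Prop :=
  forall x y, x \in I -> y \in I -> x != y -> ~~ (x >=< y)%O.

(* Main.v *)
Require Import Defs.
From HB Require Import structures.
From mathcomp Require Import all_boot all_order.
From mathcomp Require Import zify.
Import Order.TTheory.

Section Aux.
Set Implicit Arguments.
Variables (disp : Order.disp_t) (P : finPOrderType disp) (m : nat).
Implicit Types A O T : {set P}.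

Definition nb (v : P) : {set P} := [set u | (v >=< u)%O].
Definition deg A v := #|A :&: nb v|.
Definition pv A := [pick v in A | [forall u in A, deg A u <= deg A v]].

Fixpoint run O A n : {set P} * {set P} :=
  match n with
  | 0 => (set0, A)
  | n'.+1 => if m < #|A| then
      match pv A with
      | Some v => if v \in O then let r := run O (A :\: nb v) n' in (v |: r.1, r.2)
                  else run O (A :\ v) n'
      | None => (set0, A) end
    else (set0, A) end.

Lemma pvP A x : x \in A -> exists v, [/\ pv A = Some v, v \in A & forall u, u \in A -> deg A u <= deg A v].
Proof.
move=> xA; rewrite /pv; case: pickP => [v /andP[vA /forallP H]|H].
  by exists v; split=> // u uA; move: (H u); rewrite uA.
exfalso; case: (arg_maxnP (deg A) xA) => v vA Hv.
have vA' : v \in A := vA.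
have := H v; rewrite vA' /= => /negP; apply; apply/forallP => u; by apply/implyP => /Hv.
Qed.

Lemma nbv v : v \in nb v.
Proof. by rewrite inE comparablexx. Qed.

Lemma run_sub O A n : (run O A n).2 \subset A.
Proof.
elim: n A => [|n IH] A /=; first exact: subxx.
case: ifP => _; last exact: subxx.
case: (pv A) => [v|]; last exact: subxx.
case: ifP => _ /=.
  by apply: subset_trans (IH _) _; apply: subsetDl.
by apply: subset_trans (IH _) _; apply: subsetDl.
Qed.

Lemma pvS A v : pv A = Some v -> v \in A /\ forall u, u \in A -> deg A u <= deg A v.
Proof.
rewrite /pv; case: pickP => [w /andP[wA /forallP H]|//] [<-].
by split=> // u uA; move: (H u); rewrite uA.
Qed.

Lemma run_T O A n : (run O A n).1 \subset O :&: A.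
Proof.
elim: n A => [|n IH] A /=; first exact: sub0set.
case: ifP => _; last exact: sub0set.
case E: (pv A) => [v|]; last exact: sub0set.
have [vA _] := @pvS A v E.
case: ifP => vO /=.
  rewrite subUset sub1set inE vO vA /=.
  exact: subset_trans (IH _) (setIS _ (subsetDl _ _)).
exact: subset_trans (IH _) (setIS _ (subsetDl _ _)).
Qed.

Lemma run_disj O A n : (run O A n).1 :&: (run O A n).2 = set0.
Proof.
elim: n A => [|n IH] A /=; first exact: set0I.
case: ifP => _; last exact: set0I.
case E: (pv A) => [v|]; last exact: set0I.
case: ifP => vO /=; last exact: IH.
rewrite setIUl IH setU0.
apply/setP => x; rewrite !inE.
apply/negbTE; apply/negP => /andP[/eqP -> vin].
have := subsetP (run_sub O (A :\: nb v) n) v vin.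
by rewrite inE nbv.
Qed.

Lemma run_cover I A n : antichain I ->
  I :&: A \subset (run I A n).1 :|: (run I A n).2.
Proof.
move=> aI; elim: n A => [|n IH] A /=.
  by rewrite set0U subsetIr.
case: ifP => _; last by rewrite set0U subsetIr.
case E: (pv A) => [v|]; last by rewrite set0U subsetIr.
have [vA _] := @pvS A v E.
case: ifP => vI /=.
  apply/subsetP => x; rewrite inE => /andP[xI xA].
  case: (x =P v) => [->|nxv]; first by rewrite !inE eqxx.
  case cvx: (v >=< x)%O.
    exfalso.
    have := aI v x vI xI; rewrite eq_sym; move/eqP: nxv => -> /(_ isT).
    by rewrite cvx.
  have : x \in I :&: (A :\: nb v) by rewrite !inE xI xA cvx.
  move/(subsetP (IH _)); rewrite !inE => /orP[->|->]; by rewrite ?orbT.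
apply: subset_trans (IH _).
apply/subsetP => x; rewrite !inE => /andP[xI xA]; rewrite xI xA andbT /=.
by apply/eqP => exv; rewrite exv vI in xI.
Qed.

Lemma run_agree I (X : {set P}) A n : (run I A n).1 \subset X -> X \subset I ->
  (run X A n).2 = (run I A n).2.
Proof.
elim: n A => [|n IH] A //=.
case: ifP => _ //.
case E: (pv A) => [v|] //.
case: ifP => vI /=.
  rewrite subUset sub1set => /andP[vX sTX] XI.
  by rewrite vX /=; apply: IH.
move=> sTX XI.
have -> : (v \in X) = false.
  by apply/negP => /(subsetP XI); rewrite vI.
exact: IH.
Qed.

Lemma run_small O A n : #|A| <= n -> #|(run O A n).2| <= m.
Proof.
elim: n A => [|n IH] A /=.
  by rewrite leqn0 => /eqP ->.
case: ifP => hm hA; last by rewrite leqNgt hm.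
have : 0 < #|A| by apply: leq_ltn_trans hm.
rewrite card_gt0 => /set0Pn [x xA].
have [v [E vA _]] := pvP xA.
rewrite E.
case: ifP => vO /=; apply: IH.
  rewrite cardsD.
  have : 0 < #|A :&: nb v| by rewrite card_gt0; apply/set0Pn; exists v; rewrite inE vA nbv.
  move=> k1; rewrite leq_subLR; apply: leq_trans hA _; by rewrite -add1n leq_add2r.
by move: hA; rewrite (cardsD1 v A) vA add1n ltnS.
Qed.


Lemma ncompE A : ncomp A = \sum_(x in A) \sum_(y in A) ((x < y)%O : nat).
Proof.
rewrite /ncomp -sum1_card.
rewrite (eq_bigl (fun p : P * P => (p.1 \in A) && ((p.2 \in A) && (p.1 < p.2)%O))); last by move=> p; rewrite inE.
rewrite -(pair_big_dep (fun x => x \in A) (fun x y => (y \in A) && (x < y)%O) (fun _ _ => 1)) /=.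
apply: eq_bigr => x _; rewrite big_mkcondr /=; apply: eq_bigr => y _; by case: (x < y)%O.
Qed.

Lemma deg_sum A x : x \in A ->
  1 + \sum_(y in A) (((x < y)%O : nat) + ((y < x)%O : nat)) <= deg A x.
Proof.
move=> xA; rewrite /deg -sum1_card.
rewrite (bigD1 x) //= ?ltxx ?add0n.
rewrite [X in _ <= X](bigD1 x) /=; last by rewrite !inE xA comparablexx.
rewrite leq_add2l big_mkcond [X in _ <= X]big_mkcond; apply: leq_sum => y _.
rewrite !inE; case: (y \in A) => //=; case: (y =P x) => //= _.
by case: (comparableP x y).
Qed.

Variable d : nat.
Hypothesis Hn : forall S : {set P}, m < #|S| -> #|S| * d <= ncomp S.

Lemma exists_big A : m < #|A| -> exists2 x, x \in A & 2 * d + 1 <= deg A x.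
Proof.
move=> hA.
case: (boolP [exists x in A, 2 * d + 1 <= deg A x]) => [/exists_inP [x xA hx]|]; first by exists x.
rewrite negb_exists_in => /forall_inP H; exfalso.
have Hsum : \sum_(x in A) (1 + \sum_(y in A) (((x < y)%O : nat) + ((y < x)%O : nat))) <= \sum_(x in A) (2 * d).
  apply: leq_sum => x xA; apply: leq_trans (deg_sum xA) _.
  by move: (H x xA); rewrite -ltnNge addn1 ltnS.
rewrite sum_nat_const big_split /= sum1_card in Hsum.
rewrite (eq_bigr (fun x => \sum_(y in A) ((x < y)%O : nat) + \sum_(y in A) ((y < x)%O : nat))) in Hsum; last by move=> x _; rewrite big_split.
rewrite big_split /= -ncompE exchange_big /= -ncompE in Hsum.
have := Hn _ hA.
have : 0 < #|A| by apply: leq_ltn_trans hA.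
move: Hsum; move: (ncomp A) (#|A|) => c a.
move=> h1 h2 h3; nia.
Qed.

Lemma run_count O A n :
  #|(run O A n).1| * (2 * d + 1) + #|(run O A n).2| <= #|A|.
Proof.
elim: n A => [|n IH] A /=; first by rewrite cards0.
case: ifP => hm; last by rewrite cards0.
case E: (pv A) => [v|]; last by rewrite cards0.
have [vA vmax] := @pvS A v E.
case: ifP => vO /=; last first.
  apply: leq_trans (IH _) _; apply: subset_leq_card; exact: subsetDl.
have [x xA hx] := exists_big _ hm.
have hv : 2 * d + 1 <= deg A v := leq_trans hx (vmax x xA).
have hd : deg A v <= #|A| by apply: subset_leq_card; exact: subsetIl.
have := IH (A :\: nb v); rewrite cardsD cardsU1.
rewrite /deg in hv hd.
move: (#|(run O (A :\: nb v) n).1|) (#|(run O (A :\: nb v) n).2|) (#|A :&: nb v|) (#|A|) hv hd => t a' k a hv hd.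
case: (v \notin _) => /=; nia.
Qed.
End Aux.

(* |T| <= |P|/(2d+1) is stated as #|T| * (2d+1) <= #|P| (exact, no rounding). *)
Theorem mainTheorem13 (disp : Order.disp_t) (P : finPOrderType disp) (d m : nat) :
  (0 < d)%N -> (0 < m)%N -> (m < #|P|)%N ->
  (forall S : {set P}, (m < #|S|)%N -> (#|S| * d <= ncomp S)%N) ->
  exists f : {set P} -> {set P},
    (forall T : {set P}, (#|T| * (2 * d + 1) <= #|P|)%N -> (#|f T| <= m)%N) /\
    (forall I : {set P}, antichain I ->
       exists T : {set P},
         [/\ T \subset I, (#|T| * (2 * d + 1) <= #|P|)%N,
             T :&: f T = set0 & I \subset T :|: f T]).
Proof.
move=> d0 m0 mP Hn.
exists (fun T => (@run _ P m T setT #|P|).2).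
split.
  by move=> T _; apply: run_small; rewrite cardsT.
move=> I aI.
set T := (@run _ P m I setT #|P|).1.
have TI : T \subset I := subset_trans (run_T _ _ _ _) (subsetIl _ _).
exists T; rewrite /=.
have -> : (@run _ P m T setT #|P|).2 = (@run _ P m I setT #|P|).2.
  exact: run_agree (subxx _) TI.
split => //.
- have := @run_count _ P m d Hn I setT #|P|; rewrite cardsT.
  exact: leq_trans (leq_addr _ _).
- exact: run_disj.
- by have := @run_cover _ P m I setT #|P| aI; rewrite setIT.
Qed.
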